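(* If $(U,\le)$ is an $\mathrm{OST}$-monoid, then addition in the semiring $U$ is compatible with the ordering: for all $x,y,z\in U$, $x\le y$ implies $x+z\le y+z$.
   Context: A supertropical monoid is a commutative monoid $(U,\cdot)$ with absorbing element $0$ and distinguished idempotent $e$ with $ex=0\Rightarrow x=0$, together with a total ordering $\le_M$ on $M:=eU$, compatible with multiplication and with $0$ least, making $M$ a bipotent semiring. The addition on $U$ is $x+y:=y$ if $ex<ey$, $x$ if $ex>ey$, $ex$ if $ex=ey$ (for OST-monoids this makes $U$ a semiring). An OST-monoid is a supertropical monoid $U$ with a total ordering $\le$ on $U$ such that: (OST1) $x\le y\Rightarrow xz\le yz$; (OST2) for $x,y\in M$, $x\le y\Leftrightarrow x\le_M y$; (OST3) $0\le1\le e$. *)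

(* Defs.v *)
From mathcomp Require Import all_boot.
Set Implicit Arguments. Unset Strict Implicit. Unset Printing Implicit Defensive.

Section Supertropical.
Variable U : Type.
Variables (mul : U -> U -> U) (one zero e : U).

Definition inM (x : U) : Prop := exists y, x = mul e y.

Definition supertropical_monoid (leM : rel U) : Prop :=
  [/\ (forall x y z, mul x (mul y z) = mul (mul x y) z),
      (forall x y, mul x y = mul y x),
      (forall x, mul one x = x),
      (forall x, mul zero x = zero) &
      (mul e e = e /\ (forall x, mul e x = zero -> x = zero))] /\
      [/\ (forall x, inM x -> leM x x),
          (forall x y, inM x -> inM y -> leM x y -> leM y x -> x = y),
          (forall x y z, inM x -> inM y -> inM z -> leM x y -> leM y z -> leM x z) &
          (forall x y, inM x -> inM y -> leM x y || leM y x)] /\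
      [/\
          (forall x y z, inM x -> inM y -> inM z -> leM x y -> leM (mul x z) (mul y z)) &
          (forall x, inM x -> leM zero x)].

Definition ltM (leM : rel U) (x y : U) : bool := leM x y && ~~ leM y x.

Definition sadd (leM : rel U) (x y : U) : U :=
  if ltM leM (mul e x) (mul e y) then y
  else if ltM leM (mul e y) (mul e x) then x
  else mul e x.

Definition OST_monoid (leM le : rel U) : Prop :=
  [/\ supertropical_monoid leM,
      [/\ (forall x, le x x),
          (forall x y, le x y -> le y x -> x = y),
          (forall x y z, le x y -> le y z -> le x z) &
          (forall x y, le x y || le y x)],
      (forall x y z, le x y -> le (mul x z) (mul y z)),
      (forall x y, inM x -> inM y -> le x y = leM x y) &
      le zero one && le one e].

End Supertropical.

(* Main.v *)
Require Import Defs.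
From mathcomp Require Import all_boot.

Theorem theorem61p5 (U : Type) (mul : U -> U -> U) (one zero e : U)
    (leM le : rel U) :
  OST_monoid mul one zero e leM le ->
  forall x y z : U, le x y ->
    le (sadd mul e leM x z) (sadd mul e leM y z).
Proof.
  move=> [ST [Lrefl Lanti Ltrans Ltot] O1 O2 /andP[L01 L1e]].
  move: ST => [[Mass Mcom M1 M0 [Mee _]] _].
  have inMe : forall u, inM mul e (mul e u) by move=> u; exists u.
  have ltE : forall u v, ltM leM (mul e u) (mul e v) = le (mul e u) (mul e v) && ~~ le (mul e v) (mul e u).
    by move=> u v; rewrite /ltM !O2.
  have Hue : forall u, le u (mul e u).
    by move=> u; have := O1 _ _ u L1e; rewrite M1.
  have Hmon : forall u v, le u v -> le (mul e u) (mul e v).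
    by move=> u v H; have := O1 _ _ e H; rewrite ![mul _ e]Mcom.
  have Hee : forall u, mul e (mul e u) = mul e u by move=> u; rewrite Mass Mee.
  have H3 : forall y z, le (mul e z) (mul e y) -> ~~ le (mul e y) (mul e z) -> le (mul e z) y.
    move=> y0 z0 Hc Hn; case/orP: (Ltot (mul e z0) y0) => // Hyc.
    by have := Hmon _ _ Hyc; rewrite Hee => Hb; rewrite Hb in Hn.
  move=> x y z Hxy.
  have Hab := Hmon _ _ Hxy.
  rewrite /sadd !ltE.
  case Eac: (le (mul e x) (mul e z)); case Eca: (le (mul e z) (mul e x));
  case Ebc: (le (mul e y) (mul e z)); case Ecb: (le (mul e z) (mul e y)) => //=;
  try (apply: Ltrans (Hue z) _; apply: H3; by rewrite ?Ebc ?Ecb);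
  try (by apply: Ltrans (Hue z) _; rewrite ?Ebc);
  try (apply: Ltrans (Lrefl _) _; apply: H3; by rewrite ?Ebc ?Ecb).
  all: try (by rewrite (Ltrans _ _ _ Hab Ebc) in Eac).
  all: try (by rewrite (Ltrans _ _ _ Ecb Hab) in Eca).
  all: try (by case/orP: (Ltot (mul e z) (mul e y)); rewrite ?Ecb ?Ebc).
  all: try (by case/orP: (Ltot (mul e z) (mul e x)); rewrite ?Eca ?Eac).
  all: try (by rewrite (Ltrans _ _ _ Eca Hab) in Ecb).
  all: rewrite (Lanti _ _ Eac Eca); apply: H3; by rewrite ?Ebc ?Ecb.
Qed.
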